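(* Let $K\ge1$, $\mathcal{X}$ a measurable space, $\mathcal{Z}=\mathcal{X}\times\{1,\ldots,K\}$, $\Theta$ a parameter set and $\ell:\Theta\times\mathcal{Z}\to\mathbb{R}_+$ measurable with $L=\sup_{(\theta,z)\in\Theta\times\mathcal{Z}}\ell(\theta,z)<\infty$. Let $Z'_i=(X'_i,S'_i)$, $i=1,\ldots,n$, be i.i.d. random elements of $\mathcal{Z}$ with $p'_k=\mathbb{P}(S'_1=k)$, and let $p_1,\ldots,p_K\ge0$ be given numbers with $\sum_k p_k=1$. Let $\varepsilon\in(0,1/2)$ and suppose $p'_k\in(\varepsilon,1-\varepsilon)$ for all $k$. Let $n'_k=\sum_{i=1}^n\mathbb{I}\{S'_i=k\}$ and define $$\widetilde{\mathcal{R}}_{w^*,n}(\theta)=\frac{1}{n}\sum_{i=1}^n\ell(\theta,Z'_i)\sum_{k=1}^K\mathbb{I}\{S'_i=k\}\frac{p_k}{p'_k},\qquad \widetilde{\mathcal{R}}_{\widehat{w}^*,n}(\theta)=\sum_{i=1}^n\ell(\theta,Z'_i)\sum_{k=1}^K\mathbb{I}\{S'_i=k\}\frac{p_k}{n'_k}.$$ Then for any $\delta\in(0,1)$, as soon as $n\ge 2\log(2K/\delta)/\varepsilon^2$, with probability larger than $1-\delta$, $$\sup_{\theta\in\Theta}\left|\widetilde{\mathcal{R}}_{\widehat{w}^*,n}(\theta)-\widetilde{\mathcal{R}}_{w^*,n}(\theta)\right|\le\frac{2L}{\varepsilon^2}\sqrt{\frac{\log(2K/\delta)}{2n}}.$$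
   Context: $\mathbb{I}\{\cdot\}$ denotes the indicator function. *)

(* Defs.v *)
From HB Require Import structures.
From mathcomp Require Import all_boot all_order all_algebra.
From mathcomp Require Import all_classical all_reals all_analysis.
Set Implicit Arguments. Unset Strict Implicit. Unset Printing Implicit Defensive.
Import Order.TTheory GRing.Theory Num.Theory.
Local Open Scope classical_set_scope.
Local Open Scope ring_scope.

(* The label set {1,...,K} (K >= 1) is encoded as
   'I_Km1.+1 with K = Km1.+1, equipped with the discrete sigma-algebra
   (all subsets measurable).  (MathComp-Analysis measurable types must be
   pointed, hence the .+1 form, which also encodes K >= 1.) *)
HB.instance Definition _ (K : nat) := isPointed.Build 'I_K.+1 ord0.
HB.instance Definition _ (K : nat) := @isMeasurable.Build default_measure_display
  'I_K.+1 discrete_measurable discrete_measurable0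
  discrete_measurableC discrete_measurableU.

(* Mutual independence of a finite family of random elements Z_i, i < n:
   the product rule for every choice of measurable sets (choosing A i = setT
   recovers the product rule for every subfamily). *)
Definition mutually_independent {R : realType} {d0 : measure_display}
  {T : measurableType d0} (P : probability T R) {dZ : measure_display}
  {Z : measurableType dZ} (n : nat) (Zs : 'I_n -> T -> Z) : Prop :=
  (forall i, measurable_fun setT (Zs i)) /\
  forall A : 'I_n -> set Z, (forall i, measurable (A i)) ->
    P (\bigcap_(i in [set: 'I_n]) (Zs i @^-1` A i)) =
    (\prod_(i < n) P (Zs i @^-1` A i))%E.

Definition identically_distributed {R : realType} {d0 : measure_display}
  {T : measurableType d0} (P : probability T R) {dZ : measure_display}
  {Z : measurableType dZ} (n : nat) (Zs : 'I_n -> T -> Z) : Prop :=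
  forall i j (A : set Z), measurable A -> P (Zs i @^-1` A) = P (Zs j @^-1` A).

Definition iid {R : realType} {d0 : measure_display}
  {T : measurableType d0} (P : probability T R) {dZ : measure_display}
  {Z : measurableType dZ} (n : nat) (Zs : 'I_n -> T -> Z) : Prop :=
  mutually_independent P Zs /\ identically_distributed P Zs.

Definition count_label {X : Type} {K n : nat} (Zs : 'I_n -> X * 'I_K) (k : 'I_K) : nat :=
  \sum_(i < n) ((Zs i).2 == k : nat).

Definition R_wstar {R : realType} {Theta X : Type} {K n : nat}
  (l : Theta -> X * 'I_K -> R) (p p' : 'I_K -> R) (Zs : 'I_n -> X * 'I_K)
  (theta : Theta) : R :=
  n%:R^-1 * \sum_(i < n) l theta (Zs i) *
    \sum_(k < K) (((Zs i).2 == k)%:R * (p k / p' k)).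

(* \tilde R_{\hat w^*,n}(theta)  (x / 0 = 0 by MathComp convention) *)
Definition R_what {R : realType} {Theta X : Type} {K n : nat}
  (l : Theta -> X * 'I_K -> R) (p : 'I_K -> R) (Zs : 'I_n -> X * 'I_K)
  (theta : Theta) : R :=
  \sum_(i < n) l theta (Zs i) *
    \sum_(k < K) (((Zs i).2 == k)%:R * (p k / (count_label Zs k)%:R)).

(* Main.v *)
Require Import Defs.
From HB Require Import structures.
From mathcomp Require Import all_boot all_order all_algebra.
From mathcomp Require Import all_classical all_reals all_analysis.
From mathcomp Require Import ring lra.
Set Implicit Arguments. Unset Strict Implicit. Unset Printing Implicit Defensive.
Import Order.TTheory GRing.Theory Num.Theory.
Local Open Scope classical_set_scope.
Local Open Scope ring_scope.

Section Prob.
Context (R : realType) (d0 : measure_display) (T : measurableType d0)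
  (P : probability T R) (dY : measure_display) (Y : measurableType dY).

Lemma subadd (I : Type) (r : seq I) (Pr : pred I) (F : I -> set T) :
  (forall i, measurable (F i)) ->
  (P (\big[setU/set0]_(i <- r | Pr i) F i) <= \sum_(i <- r | Pr i) P (F i))%E.
Proof.
move=> mF; elim: r => [|x r IH]; first by rewrite !big_nil measure0.
rewrite !big_cons; case: ifP => _ //.
apply: le_trans (measureU2 _ _ _) _ => //; first exact: bigsetU_measurable.
exact: leeD.
Qed.

Definition atom n (Z : 'I_n -> T -> Y) (C : set Y) (f : {ffun 'I_n -> bool}) :=
  \bigcap_(i in [set: 'I_n]) (Z i @^-1` (if f i then C else ~` C)).

Lemma atom_measurable n (Z : 'I_n -> T -> Y) C f :
  (forall i, measurable_fun setT (Z i)) -> measurable C -> measurable (atom Z C f).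
Proof.
move=> mZ mC; apply: fin_bigcap_measurable => // i _.
rewrite -[X in measurable X]setTI; apply: mZ => //.
by case: (f i) => //; apply: measurableC.
Qed.

Lemma atomP n (Z : 'I_n -> T -> Y) C q :
  mutually_independent P Z -> measurable C ->
  (forall i, P (Z i @^-1` C) = q%:E) -> forall f,
  P (atom Z C f) = (\prod_i (if f i then q else 1 - q))%:E.
Proof.
move=> [mZ ind] mC PC f; rewrite /atom ind; last first.
  by move=> i; case: (f i) => //; apply: measurableC.
rewrite -prodEFin; apply: eq_bigr => i _.
case: (f i) => //.
rewrite -preimage_setC probability_setC ?PC ?EFinB //.
by rewrite -[X in measurable X]setTI; apply: mZ.
Qed.

Definition cnt n (Z : 'I_n -> T -> Y) (C : set Y) (w : T) : nat :=
  \sum_(i < n) ((Z i w \in C) : nat).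

Lemma cnt_eq n (Z : 'I_n -> T -> Y) C (m : R) :
  [set w | m <= (cnt Z C w)%:R] =
  \big[setU/set0]_(f <- index_enum {ffun 'I_n -> bool} |
        m <= (\sum_(i < n) (f i : nat))%:R) atom Z C f.
Proof.
rewrite -bigcup_seq_cond; apply/seteqP; split => w /=.
  move=> Hw; exists [ffun i => Z i w \in C].
    apply/andP; split; first by rewrite mem_index_enum.
    by rewrite (eq_bigr (fun i => (Z i w \in C) : nat)) // => i _; rewrite ffunE.
  move=> i _ /=; rewrite ffunE; case: ifP => [/set_mem|/negbT/negP Hn] //.
  by move=> HC; apply: Hn; apply/mem_set.
move=> [f /andP[_ Gf] Hat]; rewrite /cnt (eq_bigr (fun i => f i : nat)) //.
move=> i _; have := Hat i I; rewrite /=; case: (f i) => [/mem_set -> //|].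
by move=> /= HC; rewrite memNset.
Qed.


Lemma exp_bound (lam : R) : 0 <= lam -> lam <= 2^-1 -> expR lam <= 1 + lam + 2 * lam ^+ 2.
Proof.
move=> l0 l1.
have h1 := expR_ge1Dx (- lam).
have h2 : expR lam * expR (- lam) = 1 by rewrite -expRD subrr expR0.
have h3 := expR_gt0 lam.
nra.
Qed.

Lemma chernoff n (Z : 'I_n -> T -> Y) C (q lam a : R) :
  mutually_independent P Z -> measurable C ->
  (forall i, P (Z i @^-1` C) = q%:E) -> 0 <= q -> q <= 1 ->
  0 <= lam -> lam <= 2^-1 ->
  (P [set w | (n%:R * q + a <= (cnt Z C w)%:R)%R] <=
     (expR (2 * n%:R * lam ^+ 2 - lam * a))%:E)%E.
Proof.
move=> ind mC PC q0 q1 l0 l1.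
have mA : forall f, measurable (atom Z C f).
  by move=> f; apply: atom_measurable => //; case: ind.
rewrite cnt_eq; apply: (le_trans (subadd _ _ mA)).
rewrite (eq_bigr _ (fun f _ => atomP ind mC PC f)) sumEFin lee_fin.
set m := n%:R * q + a.
set e := expR lam.
have W0 (f : {ffun 'I_n -> bool}) : 0 <= \prod_i (if f i then q else 1 - q).
  by apply: prodr_ge0 => i _; case: (f i) => //; lra.
apply: le_trans (_ : \sum_(f <- index_enum {ffun 'I_n -> bool})
   (\prod_i (if f i then q else 1 - q)) *
     expR (lam * ((\sum_(i < n) (f i : nat))%:R - m)) <= _).
  rewrite big_mkcond /=; apply: ler_sum => f _; case: ifP => Hf.
    rewrite ler_peMr //; apply: (le_trans _ (expR_ge1Dx _)); rewrite lerDl; apply: mulr_ge0 => //.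
    by rewrite subr_ge0.
  by apply: mulr_ge0 => //; apply: ltW; apply: expR_gt0.
have -> : \sum_(f <- index_enum {ffun 'I_n -> bool})
   (\prod_i (if f i then q else 1 - q)) *
     expR (lam * ((\sum_(i < n) (f i : nat))%:R - m)) =
   expR (- (lam * m)) * \prod_(i < n) (q * e + (1 - q)).
  transitivity (expR (- (lam * m)) * \prod_(i < n) \sum_(b : bool) (if b then q * e else 1 - q)); last first.
    by congr (_ * _); apply: eq_bigr => i _; rewrite big_bool.
  rewrite bigA_distr_bigA mulr_sumr; apply: eq_bigr => f _.
  rewrite mulrBr expRD mulrA [RHS]mulrC; congr (_ * _).
  rewrite natr_sum mulr_sumr expR_sum -big_split /=; apply: eq_bigr => i _.
  by case: (f i); rewrite /= ?mulr1 ?mulr0 ?expR0 ?mulr1.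
rewrite prodr_const card_ord.
have e1 : 1 + lam <= e := expR_ge1Dx lam.
have e2 : e <= 1 + lam + 2 * lam ^+ 2 := exp_bound l0 l1.
have b0 : 0 <= q * e + (1 - q) by nra.
have b1 : q * e + (1 - q) <= expR (q * (e - 1)).
  by apply: (le_trans _ (expR_ge1Dx _)); lra.
apply: le_trans (_ : expR (- (lam * m)) * expR (q * (e - 1)) ^+ n <= _).
  apply: ler_wpM2l; first exact/ltW/expR_gt0.
  by apply: lerXn2r => //; rewrite nnegrE //; apply/ltW/expR_gt0.
rewrite -expRM_natl -expRD ler_expR /m.
have n0 : 0 <= n%:R :> R by [].
have h : q * (e - 1 - lam) <= 2 * lam ^+ 2 by nra.
have := ler_wpM2l n0 h; lra.
Qed.

End Prob.

Lemma det (R : realType) (Theta X : Type) (K n : nat) (l : Theta -> X * 'I_K -> R)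
  (L : R) (p p' : 'I_K -> R) (Zs : 'I_n -> X * 'I_K) (th : Theta) (eps s : R) :
  (forall th z, 0 <= l th z) -> (forall th z, l th z <= L) ->
  (forall k, 0 <= p k) -> \sum_(k < K) p k = 1 ->
  0 < eps -> (forall k, eps < p' k) -> (0 < n)%N -> 0 <= s ->
  (forall k, `|(count_label Zs k)%:R - n%:R * p' k| <= n%:R * s) ->
  `|R_what l p Zs th - R_wstar l p p' Zs th| <= L * s / eps.
Proof.
move=> l0 lL p0 p1 e0 pe n0 s0 hk.
pose W k := \sum_(i < n) l th (Zs i) * ((Zs i).2 == k)%:R.
have -> : R_what l p Zs th - R_wstar l p p' Zs th =
   \sum_(k < K) W k * (p k / (count_label Zs k)%:R - n%:R^-1 * (p k / p' k)).
  rewrite /R_what /R_wstar /W mulr_sumr -sumrB.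
  under [RHS]eq_bigr do rewrite mulr_suml.
  rewrite [RHS]exchange_big; apply: eq_bigr => i _ /=.
  rewrite !mulr_sumr -sumrB; apply: eq_bigr => k _; ring.
have L0 : 0 <= L by apply: le_trans (l0 th (Zs (Ordinal n0))) (lL _ _).
have nR : 0 < n%:R :> R by rewrite ltr0n.
apply: (le_trans (ler_norm_sum _ _ _)).
apply: (@le_trans _ _ (\sum_(k < K) p k * (L * s / eps))); last first.
  by rewrite -mulr_suml p1 mul1r.
apply: ler_sum => k _.
set c := (count_label Zs k)%:R.
have W0 : 0 <= W k.
  by apply: sumr_ge0 => i _; apply: mulr_ge0.
have WL : W k <= L * c.
  rewrite /c /count_label natr_sum mulr_sumr; apply: ler_sum => i _.
  by apply: ler_wpM2r => //; apply: ler0n.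
have pk := pe k.
have ds : 0 <= L * s / eps by apply: divr_ge0 => //; [apply: mulr_ge0|apply: ltW].
have [c0|cpos] := eqVneq c 0.
  have -> : W k = 0 by apply: le_anti; rewrite W0 andbT; move: WL; rewrite c0 mulr0.
  by rewrite mul0r normr0; apply: mulr_ge0.
have p'0 : p' k != 0 by apply/negP => /eqP h; move: pk; rewrite h; lra.
have n0' : n%:R != 0 :> R by rewrite pnatr_eq0 -lt0n.
have cgt : 0 < c by rewrite lt0r cpos /c ler0n.
have -> : W k * (p k / c - n%:R^-1 * (p k / p' k)) =
    (W k / c) * p k * ((n%:R * p' k - c) / (n%:R * p' k)).
  by field; apply/and3P; split.
rewrite 2!normrM.
have h1 : `|W k / c| <= L.
  by rewrite ger0_norm ?divr_ge0 ?ler0n // ler_pdivrMr.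
have h2 : `|(n%:R * p' k - c) / (n%:R * p' k)| <= s / eps.
  have np : 0 < n%:R * p' k by apply: mulr_gt0 => //; lra.
  rewrite normrM normfV (gtr0_norm np) ler_pdivrMr // distrC.
  apply: (le_trans (hk k)).
  have -> : n%:R * s = s / eps * (n%:R * eps) by field; lra.
  apply: ler_wpM2l; first by apply: divr_ge0 => //; apply: ltW.
  by apply: ler_wpM2l; [apply: ltW|apply: ltW].
rewrite (ger0_norm (p0 k)).
have -> : p k * (L * s / eps) = L * p k * (s / eps) by rewrite !mulrA [p k * L]mulrC.
apply: ler_pM => //; first by apply: mulr_ge0.
by apply: ler_pM.
Qed.

Lemma memC1 (X : Type) K (k : 'I_K) (z : X * 'I_K) :
  (z \in (@setT X `*` [set k])) = (z.2 == k).
Proof.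
apply/idP/eqP => [/set_mem [_ /= ->] //|e]; apply/mem_set; split => //.
Qed.

Theorem lemma3 (R : realType) (d0 : measure_display) (T : measurableType d0)
  (P : probability T R)
  (dX : measure_display) (X : measurableType dX)
  (dTh : measure_display) (Theta : measurableType dTh)
  (Km1 : nat) (l : Theta -> X * 'I_Km1.+1 -> R) (L : R)
  (n : nat) (Z : 'I_n -> T -> X * 'I_Km1.+1)
  (p p' : 'I_Km1.+1 -> R) (eps delta : R) :
  measurable_fun setT (fun q : Theta * (X * 'I_Km1.+1) => l q.1 q.2) ->
  (forall th z, 0 <= l th z) ->
  (forall th z, l th z <= L) ->
  iid P Z ->
  (forall i k, P [set w | (Z i w).2 = k] = (p' k)%:E) ->
  (forall k, 0 <= p k) -> \sum_(k < Km1.+1) p k = 1 ->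
  0 < eps -> eps < 2^-1 ->
  (forall k, eps < p' k < 1 - eps) ->
  0 < delta -> delta < 1 ->
  2 * ln (2 * (Km1.+1)%:R / delta) / eps ^+ 2 <= n%:R ->
  exists E : set T, measurable E /\ ((1 - delta)%:E < P E)%E /\
    forall w, E w -> forall th : Theta,
      `| R_what l p (fun i => Z i w) th - R_wstar l p p' (fun i => Z i w) th |
        <= 2 * L / eps ^+ 2 * Num.sqrt (ln (2 * (Km1.+1)%:R / delta) / (2 * n%:R)).
Proof.
move=> _ l0 lL [ind _] PZ p0 p1 e0 e1 pe d0' d1 hn.
set K := Km1.+1 in hn *.
set L0 := ln (2 * K%:R / delta) in hn *.
have K1 : 1 <= K%:R :> R by rewrite ler1n.
have q0 : 0 < 2 * K%:R / delta by apply: divr_gt0 => //; lra.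
have L0pos : 0 < L0.
  by apply: ln_gt0; rewrite ltr_pdivlMr // mul1r; lra.
have e20 : 0 < eps ^+ 2 by apply: exprn_gt0.
have npos : 0 < n%:R :> R.
  by apply: (lt_le_trans _ hn); apply: divr_gt0 => //; lra.
have n0 : (0 < n)%N by rewrite -(ltr0n R).
set t := Num.sqrt (L0 / (2 * n%:R)).
set s := 2 * t / eps.
have t0 : 0 <= t by apply: sqrtr_ge0.
have t2 : t ^+ 2 = L0 / (2 * n%:R) by apply: sqr_sqrtr; apply: divr_ge0; lra.
have s0 : 0 <= s by apply: divr_ge0; lra.
have ns2 : n%:R * s ^+ 2 = 2 * L0 / eps ^+ 2.
  rewrite /s expr_div_n exprMn t2; field; apply/andP; split; lra.
have s1 : s <= 1.
  have : s ^+ 2 <= 1.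
    rewrite -(ler_pM2l npos) mulr1 ns2 //.
  nra.
set lam := s / 4.
set x := expR (- (L0 / (4 * eps ^+ 2))).
have hx : x < delta / (2 * K%:R).
  have -> : delta / (2 * K%:R) = expR (- L0).
    rewrite expRN lnK; last by rewrite posrE.
    by rewrite invf_div.
  rewrite ltr_expR ltrN2 ltr_pdivlMr; last lra.
  have : 4 * eps ^+ 2 < 1 by rewrite expr2; nra.
  nra.
have [mZ _] := ind.
pose C1 (k : 'I_K) := @setT X `*` [set k].
pose C2 (k : 'I_K) := ~` C1 k.
have mC1 k : measurable (C1 k) by apply: measurableX.
have mC2 k : measurable (C2 k) by apply: measurableC.
have mpre i (C : set (X * 'I_K)) : measurable C -> measurable (Z i @^-1` C).
  by move=> mC; rewrite -[X in measurable X]setTI; apply: mZ.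
have PC1 i k : P (Z i @^-1` C1 k) = (p' k)%:E.
  rewrite -(PZ i k); congr (P _); apply/seteqP; split => w /=.
    by move=> [_ ->].
  by move=> e; split => //.
have PC2 i k : P (Z i @^-1` C2 k) = (1 - p' k)%:E.
  rewrite /C2 -preimage_setC probability_setC; last exact: mpre.
  by transitivity (1 - (p' k)%:E)%E; [congr (_ - _)%E; exact: PC1|rewrite EFinB].
pose U k := [set w | (n%:R * p' k + n%:R * s <= (cnt Z (C1 k) w)%:R)%R].
pose V k := [set w | (n%:R * (1 - p' k) + n%:R * s <= (cnt Z (C2 k) w)%:R)%R].
have mcnt (C : set (X * 'I_K)) (m : R) : measurable C ->
    measurable [set w | (m <= (cnt Z C w)%:R)%R].
  move=> mC; rewrite (cnt_eq Z C m); apply: bigsetU_measurable => f _.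
  exact: atom_measurable.
have mU k : measurable (U k) by apply: mcnt.
have mV k : measurable (V k) by apply: mcnt.
have lam0 : 0 <= lam by rewrite /lam; lra.
have lam1 : lam <= 2^-1 by rewrite /lam; lra.
have xE : expR (2 * n%:R * lam ^+ 2 - lam * (n%:R * s)) = x.
  congr expR; rewrite /lam.
  have -> : 2 * n%:R * (s / 4) ^+ 2 - s / 4 * (n%:R * s) = - (n%:R * s ^+ 2 / 8).
    by field.
  by rewrite ns2; congr (- _); field; lra.
have PU k : (P (U k) <= x%:E)%E.
  rewrite -xE; apply: chernoff => //.
    by case/andP: (pe k); lra.
  by case/andP: (pe k); lra.
have PV k : (P (V k) <= x%:E)%E.
  rewrite -xE; apply: chernoff => //.
    by case/andP: (pe k); lra.
  by case/andP: (pe k); lra.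
pose bad := \big[setU/set0]_(k < K) (U k `|` V k).
have mbad : measurable bad.
  by apply: bigsetU_measurable => k _; apply: measurableU.
exists (~` bad); split; first exact: measurableC.
split.
  have hb : (P bad <= ((x + x) *+ K)%:E)%E.
    rewrite /bad; apply: (le_trans (subadd P _ _ (fun k => measurableU _ _ (mU k) (mV k)))).
    have -> : (x + x) *+ K = \sum_(k < K) (x + x) by rewrite sumr_const card_ord.
    rewrite -sumEFin; apply: lee_sum => k _.
    apply: (le_trans (measureU2 _ _ _)) => //.
    by rewrite EFinD; apply: leeD; [exact: PU|exact: PV].
  rewrite probability_setC //.
  have h0 : (0 <= P bad)%E by apply: measure_ge0.
  move: (P bad) hb h0 => [r| |] hb h0.
  2,3: by [].
  rewrite -EFinB lte_fin; rewrite lee_fin in hb.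
  have : (x + x) *+ K = 2 * K%:R * x by rewrite -mulr_natr; ring.
  move=> hK; rewrite hK in hb.
  have : 2 * K%:R * x < delta.
    by rewrite -ltr_pdivlMl; [rewrite mulrC|lra].
  lra.
move=> w Hw th.
have nU k : ~ U k w.
  by move=> h; apply: Hw; rewrite /bad (bigD1 k) //=; left; left.
have nV k : ~ V k w.
  by move=> h; apply: Hw; rewrite /bad (bigD1 k) //=; left; right.
have c1E k : cnt Z (C1 k) w = count_label (fun i => Z i w) k.
  by apply: eq_bigr => i _; rewrite memC1.
have c12 k : (cnt Z (C1 k) w + cnt Z (C2 k) w = n)%N.
  rewrite /cnt -big_split /= -[n in RHS]card_ord -sum1_card.
  apply: eq_bigr => i _; rewrite /C2 in_setC.
  by case: (Z i w \in C1 k).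
have hk k : `|(count_label (fun i => Z i w) k)%:R - n%:R * p' k| <= n%:R * s.
  rewrite -c1E.
  have u := nU k; have v := nV k.
  rewrite /U /= in u; rewrite /V /= in v.
  move/negP: u; rewrite -ltNge => u.
  move/negP: v; rewrite -ltNge => v.
  have := c12 k => /(congr1 (fun m => m%:R : R)); rewrite natrD => e.
  rewrite ler_norml; apply/andP; split; lra.
have pe' k : eps < p' k by case/andP: (pe k).
apply: (le_trans (det th l0 lL p0 p1 e0 pe' n0 s0 hk)).
have -> : L * s / eps = 2 * L / eps ^+ 2 * t by rewrite /s; field; lra.
by [].
Qed.
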